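(* Let $\mathcal{A}$ be a parameter-preserving reduction algorithm (polynomial-time) for Max $k$-Weight SAT that preserves the set of variables, i.e. on input $(\Phi = (\mathcal{V}, \mathcal{C}), k)$ it produces $(\Phi' = (\mathcal{V}', \mathcal{C}'), k)$ with $\mathcal{V}' = \mathcal{V}$. Suppose there exist $\delta, h \ge 0$ and $s > 0$ (where $h, s$ may depend on $(\Phi, k)$) such that for every solution $Y \subseteq \mathcal{V}$ with $|Y| \le k$, $$|\mathrm{val}_{\Phi}(Y) - s \cdot \mathrm{val}_{\Phi'}(Y) - h| \le \delta \cdot \mathrm{OPT}_{\Phi, k}.$$ Then $(\mathcal{A}, \mathrm{Iden})$ is a $(1, 2\delta)$-APPA, where $\mathrm{Iden}$ is the solution-lifting algorithm that outputs its input solution unchanged.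
   Context: Max $k$-Weight SAT: input is a CNF formula $\Phi = (\mathcal{V}, \mathcal{C})$ with variable set $\mathcal{V}$ and a multiset $\mathcal{C}$ of clauses, plus a positive integer $k$. A solution is $Y \subseteq \mathcal{V}$ with $|Y| \le k$ (variables set to true); $\mathrm{val}_\Phi(Y)$ is the number of clauses (with multiplicity) satisfied by $Y$; $\mathrm{OPT}_{\Phi,k} = \max_{|Y|\le k}\mathrm{val}_\Phi(Y)$. A solution is $\beta$-approximate if its value is at least $\beta\cdot\mathrm{OPT}$. An $(\alpha,\gamma)$-APPA is a pair of polynomial-time algorithms $(\mathcal{A},\mathcal{B})$ where $\mathcal{A}$ maps an instance $(I,k)$ to an instance $(I',k')$ and $\mathcal{B}$ maps any $\beta$-approximate solution of $(I',k')$ to an $(\alpha\beta-\gamma)$-approximate solution of $(I,k)$. Parameter-preserving means $k'=k$. *)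

(* Defs.v *)
From mathcomp Require Import all_boot all_order all_algebra.
Set Implicit Arguments. Unset Strict Implicit. Unset Printing Implicit Defensive.
Import Order.TTheory GRing.Theory Num.Theory.

(* A literal over variables V: (x, true) is x, (x, false) is not x. *)
Definition literal (V : finType) := (V * bool)%type.
Definition clause (V : finType) := seq (literal V).
(* A CNF formula (V, C): the variable set is the finite type V,
   C is a multiset (sequence) of clauses. *)
Definition cnf (V : finType) := seq (clause V).

(* Y = set of variables assigned true. *)
Definition lit_sat (V : finType) (Y : {set V}) (l : literal V) : bool :=
  (l.1 \in Y) == l.2.
Definition clause_sat (V : finType) (Y : {set V}) (c : clause V) : bool :=
  has (lit_sat Y) c.

Definition cnf_val (V : finType) (Phi : cnf V) (Y : {set V}) : nat :=
  count (clause_sat Y) Phi.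

Definition OPT (V : finType) (Phi : cnf V) (k : nat) : nat :=
  \max_(Y : {set V} | #|Y| <= k) cnf_val Phi Y.

Definition approx_sol (R : realFieldType) (V : finType) (Phi : cnf V) (k : nat)
  (beta : R) (Y : {set V}) : Prop :=
  (#|Y| <= k)%N /\ ((cnf_val Phi Y)%:R >= beta * (OPT Phi k)%:R)%R.

(* Reductions that are parameter-preserving (k' = k) and variable-preserving
   (V' = V): they only transform the clause multiset. *)
Definition reduction := forall (V : finType), cnf V -> nat -> cnf V.
Definition lifting := forall (V : finType), cnf V -> nat -> {set V} -> {set V}.

Definition Iden : lifting := fun V Phi k Y => Y.

(* (alpha, gamma)-APPA (approximation guarantee part), approximation ratios
   beta ranging over [0,1]. *)
Definition is_APPA (R : realFieldType) (alpha gamma : R)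
  (A : reduction) (B : lifting) : Prop :=
  forall (V : finType) (Phi : cnf V) (k : nat), (0 < k)%N ->
  forall (beta : R) (Y : {set V}), (0 <= beta <= 1)%R ->
    approx_sol (A V Phi k) k beta Y ->
    approx_sol Phi k (alpha * beta - gamma)%R (B V Phi k Y).

(* Main.v *)
Require Import Defs.
From mathcomp Require Import all_boot all_order all_algebra.
From mathcomp Require Import lra.
Import Order.TTheory GRing.Theory Num.Theory.
Local Open Scope ring_scope.

Theorem lemma2p3 (R : realFieldType) (A : reduction) (delta : R) :
  0 <= delta ->
  (forall (V : finType) (Phi : cnf V) (k : nat), (0 < k)%N ->
     exists h s : R, 0 <= h /\ 0 < s /\
       forall Y : {set V}, (#|Y| <= k)%N ->
         `|(cnf_val Phi Y)%:R - s * (cnf_val (A V Phi k) Y)%:R - h|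
           <= delta * (OPT Phi k)%:R) ->
  is_APPA 1 (2 * delta) A Iden.
Proof.
move=> d0 H V Phi k k0 beta Y /andP[b0 b1] [HY Happ].
have [h [s [h0 [s0 Hb]]]] := H V Phi k k0.
split=> //; rewrite /Iden.
have P0 : (#|(set0 : {set V})| <= k)%N by rewrite cards0.
have cA : (0 < #|[pred Z : {set V} | (#|Z| <= k)%N]|)%N.
  by apply/card_gt0P; exists set0; rewrite inE.
have [Ys HYs EO] := eq_bigmax_cond (cnf_val Phi) cA.
rewrite inE /= in HYs.
have {}EO : OPT Phi k = cnf_val Phi Ys by rewrite /OPT -EO.
have HO' : (cnf_val (A V Phi k) Ys <= OPT (A V Phi k) k)%N.
  by rewrite /OPT; apply: leq_bigmax_cond.
move: (Hb _ HY) (Hb _ HYs) Happ; rewrite -EO.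
have : ((cnf_val (A V Phi k) Ys)%:R <= (OPT (A V Phi k) k)%:R :> R) by rewrite ler_nat.
set O := (OPT Phi k)%:R; set O' := (OPT (A V Phi k) k)%:R.
set vY := (cnf_val Phi Y)%:R; set vY' := (cnf_val (A V Phi k) Y)%:R.
pose vs : R := (cnf_val Phi Ys)%:R; set vs' := (cnf_val (A V Phi k) Ys)%:R.
have Ovs : O = vs by rewrite /O EO.
have O0 : 0 <= O by rewrite /O ler0n.
have vs'0 : 0 <= vs' by rewrite ler0n.
move=> Hle /ler_normlP [H1 H2] /ler_normlP [H3 H4] Ha.
have t1 : s * (beta * O') <= s * vY' by rewrite ler_pM2l.
have t2 : beta * vs' <= beta * O' by apply: ler_wpM2l.
have t3 : beta * h <= h by rewrite -[X in _ <= X]mul1r ler_wpM2r.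
have t4 : beta * (delta * O) <= delta * O by rewrite -[X in _ <= X]mul1r ler_wpM2r // mulr_ge0.
have t5 : beta * (vs - delta * O) <= beta * (s * vs' + h).
  by apply: ler_wpM2l => //; rewrite -Ovs; lra.
rewrite Ovs in t4 t5 H1 H2 H3 H4 *.
nra.
Qed.
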